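(* Let $\psi:[0,1]\to[0,1]$ be an increasing, differentiable, convex function. If $\psi(e^{-r/e})+\psi(re^{-r/e})\ge1$ for all $r\in[0,1]$, then $\psi(e^{-r/e})+\psi(re^{-r/e})\ge1$ for all $r\in[0,e]$. *)

(* Defs.v *)
From Stdlib Require Import Reals Lra.
Open Scope R_scope.

Definition in01 (x : R) : Prop := 0 <= x <= 1.

Definition maps01 (psi : R -> R) : Prop :=
  forall x, in01 x -> in01 (psi x).

Definition increasing_on01 (psi : R -> R) : Prop :=
  forall x y, in01 x -> in01 y -> x <= y -> psi x <= psi y.

Definition convex_on01 (psi : R -> R) : Prop :=
  forall x y t, in01 x -> in01 y -> 0 <= t <= 1 ->
    psi (t * x + (1 - t) * y) <= t * psi x + (1 - t) * psi y.

Definition differentiable_on01 (psi : R -> R) : Prop :=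
  forall x, in01 x -> exists l : R,
    limit1_in (fun y => (psi y - psi x) / (y - x))
              (fun y => in01 y /\ y <> x) l x.

(* Main.v *)
Require Import Defs.
From Stdlib Require Import Reals Lra Psatz.
Open Scope R_scope.

Theorem lemma5p4 (psi : R -> R)
  (Hmap : maps01 psi)
  (Hinc : increasing_on01 psi)
  (Hdiff : differentiable_on01 psi)
  (Hconv : convex_on01 psi)
  (H01 : forall r, 0 <= r <= 1 ->
           psi (exp (- r / exp 1)) + psi (r * exp (- r / exp 1)) >= 1) :
  forall r, 0 <= r <= exp 1 ->
    psi (exp (- r / exp 1)) + psi (r * exp (- r / exp 1)) >= 1.
Proof.
  intros r [Hr0 Hre].
  destruct (Rle_lt_dec r 1) as [Hr1|Hr1]; [apply H01; lra|].
  set (E := exp 1) in *.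
  assert (HE : 0 < E) by apply exp_pos.
  destruct (ln_exists1 r ltac:(lra)) as [u Hu].
  assert (Hu0 : 0 <= u).
  { destruct (Rle_lt_dec 0 u) as [h|h]; [exact h|].
    pose proof (exp_increasing _ _ h); rewrite exp_0 in *; lra. }
  assert (Hu1 : u <= 1).
  { destruct (Rle_lt_dec u 1) as [h|h]; [exact h|].
    pose proof (exp_increasing _ _ h); unfold E in *; lra. }
  assert (F1 : E * u <= exp u).
  { replace u with (1 + (u - 1)) at 2 by ring. rewrite exp_plus.
    pose proof (exp_ineq1_le (u-1)). fold E. nra. }
  assert (Hinv : exp u * exp (- u) = 1).
  { rewrite <- exp_plus. replace (u + - u) with 0 by ring. apply exp_0. }
  assert (F2 : exp u * (1 - u) <= 1).
  { pose proof (exp_ineq1_le (-u)). pose proof (exp_pos u). nra. }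
  assert (F3 : exp u * (2 - u) <= E).
  { assert (exp u * exp (1 - u) = E) by
      (rewrite <- exp_plus; replace (u + (1 - u)) with 1 by ring; reflexivity).
    pose proof (exp_ineq1_le (1-u)). pose proof (exp_pos u). nra. }
  assert (Chord : exp u <= (1 - u) + u * E).
  { assert (exp u = exp u * ((1-u)*(1-u) + u*(2-u))) by ring.
    nra. }
  set (s := r - E * u).
  assert (Hs0 : 0 <= s) by (unfold s; lra).
  assert (Hsr : s * r <= 1).
  { unfold s; rewrite Hu.
    pose proof (exp_ineq1_le (-u)). pose proof (exp_pos u). nra. }
  assert (Hs1 : s <= 1) by nra.
  set (y := exp (- r / E)).
  assert (Hy0 : 0 < y) by apply exp_pos.
  assert (Hy1 : y <= 1).
  { unfold y. destruct (Req_dec r 0) as [h|h]; [lra|].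
    assert (- r / E < 0).
    { unfold Rdiv. assert (0 < / E) by (apply Rinv_0_lt_compat; lra). nra. }
    pose proof (exp_increasing _ _ H). rewrite exp_0 in *; lra. }
  assert (Has : exp (- s / E) = r * y).
  { unfold y. transitivity (exp (u + - r / E)).
    - f_equal. unfold s. field. lra.
    - rewrite exp_plus, <- Hu. reflexivity. }
  specialize (H01 s ltac:(lra)). rewrite Has in H01.
  assert (psi (s * (r * y)) <= psi y).
  { apply Hinc; unfold in01; repeat split; try lra.
    - assert (0 <= r * y) by nra. nra.
    - assert (s * (r * y) = (s * r) * y) by ring. nra.
    - assert (s * (r * y) = (s * r) * y) by ring. nra. }
  lra.
Qed.
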